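(* Let $d\in\{1,2,3\}$ and $\delta_0\in(0,1)$. (a) $U^{\delta_0,1}(x)\le V^\infty(x)$ for all $|x|>1$. (b) For every $\delta\in(0,1)$ there is $C_\delta>1$, not depending on $\delta_0$, such that $U^{\delta_0,1}(x)\ge(1-\delta)V^\infty(x)$ for all $|x|\ge C_\delta/\delta_0$.
   Context: $V^\infty(x)=2(4-d)|x|^{-2}$ for $x\ne0$. For $\lambda>0$, $U^{\lambda,1}$ is the unique nonnegative function continuous on $\{|x|\ge1\}$ and $C^2$ on $\{|x|>1\}$ solving $\Delta U=U^2$ on $\{|x|>1\}$ with $U=\lambda$ on $\{|x|=1\}$; equivalently $U^{\lambda,1}(x)=-\log\mathbb E_{\delta_x}\exp(-\lambda X_{G_1}(1))$ where $X_{G_1}$ is the exit measure of super-Brownian motion (branching rate one) from $G_1=\{|y|>1\}$. It is radial and tends to $0$ as $|x|\to\infty$. *)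

(* Defs.v *)
(* classical reals. Points of R^d are encoded as sequences
   x : nat -> R whose coordinates of index >= d vanish (predicate [inRd]). *)
From Stdlib Require Import Reals Lra Lia.
Open Scope R_scope.

Definition inRd (d : nat) (x : nat -> R) : Prop :=
  forall i, (d <= i)%nat -> x i = 0.

Fixpoint sumsq (d : nat) (x : nat -> R) : R :=
  match d with
  | O => 0
  | S k => sumsq k x + x k ^ 2
  end.

Definition norm (d : nat) (x : nat -> R) : R := sqrt (sumsq d x).

Definition vsub (x y : nat -> R) : nat -> R := fun i => x i - y i.

Definition shift (x : nat -> R) (i : nat) (t : R) : nat -> R :=
  fun j => if Nat.eqb j i then x j + t else x j.

Definition partial_is (u : (nat -> R) -> R) (i : nat) (x : nat -> R) (l : R) : Prop :=
  derivable_pt_lim (fun t => u (shift x i t)) 0 l.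

Definition cont_at (d : nat) (f : (nat -> R) -> R) (x : nat -> R) : Prop :=
  forall eps, 0 < eps -> exists del, 0 < del /\
    forall y, inRd d y -> norm d (vsub y x) < del -> Rabs (f y - f x) < eps.

Definition cont_on (d : nat) (S : (nat -> R) -> Prop) (f : (nat -> R) -> R) : Prop :=
  forall x, inRd d x -> S x ->
  forall eps, 0 < eps -> exists del, 0 < del /\
    forall y, inRd d y -> S y -> norm d (vsub y x) < del -> Rabs (f y - f x) < eps.

Fixpoint sum_to (d : nat) (f : nat -> R) : R :=
  match d with
  | O => 0
  | S k => sum_to k f + f k
  end.

Definition C2_with_laplacian (d : nat) (Omega : (nat -> R) -> Prop)
  (u : (nat -> R) -> R) (L : (nat -> R) -> R) : Prop :=
  exists (Du : nat -> (nat -> R) -> R) (D2u : nat -> nat -> (nat -> R) -> R),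
    forall x, inRd d x -> Omega x ->
      cont_at d u x /\
      (forall i, (i < d)%nat ->
         partial_is u i x (Du i x) /\ cont_at d (Du i) x /\
         (forall j, (j < d)%nat ->
            partial_is (Du i) j x (D2u i j x) /\ cont_at d (D2u i j) x)) /\
      L x = sum_to d (fun i => D2u i i x).

Definition is_U_lam1 (d : nat) (lam : R) (U : (nat -> R) -> R) : Prop :=
  (forall x, inRd d x -> 1 <= norm d x -> 0 <= U x) /\
  cont_on d (fun x => 1 <= norm d x) U /\
  C2_with_laplacian d (fun x => 1 < norm d x) U (fun x => U x ^ 2) /\
  (forall x, inRd d x -> norm d x = 1 -> U x = lam) /\
  (forall eps, 0 < eps -> exists M, forall x, inRd d x -> M < norm d x ->
     Rabs (U x) < eps).

Definition Vinf (d : nat) (x : nat -> R) : R := 2 * (4 - INR d) / (norm d x ^ 2).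

(* Main.v *)
Require Import Defs.
From Stdlib Require Import Reals Lra Lia Psatz FunctionalExtensionality ClassicalEpsilon Classical.
Open Scope R_scope.

Lemma sumsq_nonneg d x : 0 <= sumsq d x.
Proof. induction d; simpl; [lra| nra]. Qed.

Lemma sumsq_shift_lt d x i t : (i < d)%nat ->
  sumsq d (shift x i t) = sumsq d x + 2 * x i * t + t ^ 2.
Proof.
  induction d as [|d IH]; intros Hi; [lia|]. simpl.
  destruct (Nat.eq_dec i d) as [->|Hne].
  - assert (E: sumsq d (shift x d t) = sumsq d x).
    { clear IH Hi. assert (forall k, (k <= d)%nat -> sumsq k (shift x d t) = sumsq k x).
      { induction k; intros Hk; simpl; auto.
        rewrite IHk by lia. unfold shift.
        replace (Nat.eqb k d) with false by (symmetry; apply Nat.eqb_neq; lia). auto. }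
      apply H; lia. }
    rewrite E. unfold shift. rewrite Nat.eqb_refl. ring.
  - rewrite IH by lia. unfold shift.
    replace (Nat.eqb d i) with false by (symmetry; apply Nat.eqb_neq; lia). ring.
Qed.

Lemma inRd_shift d x i t : inRd d x -> (i < d)%nat -> inRd d (shift x i t).
Proof.
  intros H Hi j Hj. unfold shift.
  replace (Nat.eqb j i) with false by (symmetry; apply Nat.eqb_neq; lia). auto.
Qed.

Lemma shift_shift x i t s : shift (shift x i t) i s = shift x i (t + s).
Proof.
  apply functional_extensionality; intro j. unfold shift.
  destruct (Nat.eqb j i); ring.
Qed.

Lemma shift0 x i : shift x i 0 = x.
Proof. apply functional_extensionality; intro j. unfold shift. destruct (Nat.eqb j i); ring. Qed.

Lemma sum_to_sq d x : sum_to d (fun i => x i ^ 2) = sumsq d x.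
Proof. induction d; simpl; auto. rewrite <- IHd; auto. Qed.

Lemma sum_to_le d a b : (forall i, (i < d)%nat -> a i <= b i) -> sum_to d a <= sum_to d b.
Proof. induction d; intros H; simpl; [lra|]. assert (a d <= b d) by (apply H; lia).
  assert (sum_to d a <= sum_to d b) by (apply IHd; intros; apply H; lia). lra. Qed.

Lemma sum_to_lin d (A B : R) x :
  sum_to d (fun i => A * x i ^ 2 + B) = A * sumsq d x + B * INR d.
Proof. induction d; [simpl; ring|].
  change (sum_to (S d) (fun i => A * x i ^ 2 + B)) with (sum_to d (fun i => A * x i ^ 2 + B) + (A * x d ^ 2 + B)).
  change (sumsq (S d) x) with (sumsq d x + x d ^ 2).
  rewrite IHd, S_INR. ring. Qed.

Lemma coord_le d x i : (i < d)%nat -> x i ^ 2 <= sumsq d x.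
Proof. induction d; intros Hi; [lia|]. simpl.
  destruct (Nat.eq_dec i d) as [->|]; [pose proof (sumsq_nonneg d x); lra|].
  assert (x i ^ 2 <= sumsq d x) by (apply IHd; lia). nra. Qed.

Lemma norm_sq d x : norm d x ^ 2 = sumsq d x.
Proof. unfold norm. simpl. rewrite Rmult_1_r. apply sqrt_sqrt, sumsq_nonneg. Qed.

Lemma norm_nonneg d x : 0 <= norm d x.
Proof. apply sqrt_pos. Qed.

Lemma norm_gt1 d x : 1 < norm d x <-> 1 < sumsq d x.
Proof. rewrite <- norm_sq. pose proof (norm_nonneg d x). split; intros; nra. Qed.
Lemma norm_ge1 d x : 1 <= norm d x <-> 1 <= sumsq d x.
Proof. rewrite <- norm_sq. pose proof (norm_nonneg d x). split; intros; nra. Qed.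
Lemma norm_eq1 d x : norm d x = 1 <-> sumsq d x = 1.
Proof. rewrite <- norm_sq. pose proof (norm_nonneg d x). split; intros; nra. Qed.


Lemma secder (g g1 : R -> R) (l eta : R) :
  0 < eta ->
  (forall t, Rabs t < eta -> derivable_pt_lim g t (g1 t)) ->
  derivable_pt_lim g1 0 l ->
  (forall t, Rabs t < eta -> g t <= g 0) -> l <= 0.
Proof.
  intros Heta Hd Hd2 Hmax.
  assert (H0 : Rabs 0 < eta) by (rewrite Rabs_R0; lra).
  assert (Hg10 : g1 0 = 0).
  { pose (pr := exist (fun l => derivable_pt_lim g 0 l) (g1 0) (Hd 0 H0) : derivable_pt g 0).
    assert (E: derive_pt g 0 pr = 0).
    { apply (deriv_maximum g (-eta) eta 0 pr); try lra.
      intros x Hx1 Hx2. apply Hmax. apply Rabs_def1; lra. }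
    exact E. }
  destruct (Rle_lt_dec l 0) as [|Hl]; auto. exfalso.
  destruct (Hd2 (l/2)) as [del Hdel]; [lra|].
  set (h0 := Rmin del eta / 2).
  assert (Hh0 : 0 < h0 /\ h0 < del /\ h0 < eta).
  { unfold h0. pose proof (cond_pos del). unfold Rmin; destruct (Rle_dec del eta); lra. }
  destruct (MVT_cor2 g g1 0 h0) as [c [Hc1 Hc2]]; [lra| |].
  { intros c Hc. apply Hd. apply Rabs_def1; lra. }
  assert (Hpos : 0 < g1 c).
  { specialize (Hdel c). rewrite Rplus_0_l, Hg10, Rminus_0_r in Hdel.
    assert (Hc0 : c <> 0) by lra.
    assert (Hca : Rabs c < del) by (rewrite Rabs_right; lra).
    specialize (Hdel Hc0 Hca).
    apply Rabs_def2 in Hdel. destruct Hdel as [_ Hlow].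
    assert (g1 c / c > l/2) by lra.
    assert (E: g1 c = (g1 c / c) * c) by (field; lra). rewrite E. nra. }
  assert (g h0 <= g 0) by (apply Hmax; rewrite Rabs_right; lra).
  nra.
Qed.


Lemma dl_eq f x l l' : derivable_pt_lim f x l -> l = l' -> derivable_pt_lim f x l'.
Proof. intros H ->; auto. Qed.
Lemma dl_ext f g x l : (forall t, f t = g t) -> derivable_pt_lim f x l -> derivable_pt_lim g x l.
Proof. intros H H1. replace g with f; auto. apply functional_extensionality; auto. Qed.
Lemma Dc a x : derivable_pt_lim (fun _ => a) x 0.
Proof. apply (derivable_pt_lim_const a x). Qed.
Lemma Did x : derivable_pt_lim (fun t => t) x 1.
Proof. apply (derivable_pt_lim_id x). Qed.
Lemma Dadd f g x a b : derivable_pt_lim f x a -> derivable_pt_lim g x b ->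
  derivable_pt_lim (fun t => f t + g t) x (a + b).
Proof. intros; apply (derivable_pt_lim_plus f g x a b); auto. Qed.
Lemma Dsub f g x a b : derivable_pt_lim f x a -> derivable_pt_lim g x b ->
  derivable_pt_lim (fun t => f t - g t) x (a - b).
Proof. intros; apply (derivable_pt_lim_minus f g x a b); auto. Qed.
Lemma Dmul f g x a b : derivable_pt_lim f x a -> derivable_pt_lim g x b ->
  derivable_pt_lim (fun t => f t * g t) x (a * g x + f x * b).
Proof. intros; apply (derivable_pt_lim_mult f g x a b); auto. Qed.
Lemma Dscal c f x a : derivable_pt_lim f x a -> derivable_pt_lim (fun t => c * f t) x (c * a).
Proof. intros; apply (derivable_pt_lim_scal f c x a); auto. Qed.
Lemma Dcomp f g x a b : derivable_pt_lim g x a -> derivable_pt_lim f (g x) b ->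
  derivable_pt_lim (fun t => f (g t)) x (b * a).
Proof. intros H1 H2. apply (derivable_pt_lim_comp g f x a b); auto. Qed.
Lemma Dinv f x a : f x <> 0 -> derivable_pt_lim f x a ->
  derivable_pt_lim (fun t => / f t) x (- a / (f x) ^ 2).
Proof. intros Hn H.
  pose proof (derivable_pt_lim_div (fun _ => 1) f x 0 a (Dc 1 x) H Hn) as H2.
  apply (dl_ext (fun t => 1 / f t)). { intro t. unfold Rdiv. ring. }
  eapply dl_eq. exact H2. unfold Rsqr. field. auto.
Qed.
Lemma Dsqrt x : 0 < x -> derivable_pt_lim sqrt x (/ (2 * sqrt x)).
Proof. apply derivable_pt_lim_sqrt. Qed.
Lemma Dpow f x a n : derivable_pt_lim f x a ->
  derivable_pt_lim (fun t => f t ^ n) x (INR n * f x ^ (Nat.pred n) * a).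
Proof. intros H. apply (Dcomp (fun y => y ^ n) f x a (INR n * f x ^ (Nat.pred n))) in H.
  eapply dl_eq. exact H. ring. apply derivable_pt_lim_pow. Qed.

Lemma Dtrans f t l : derivable_pt_lim (fun s => f (t + s)) 0 l -> derivable_pt_lim f t l.
Proof. intros H eps Heps. destruct (H eps Heps) as [del Hd]. exists del.
  intros h Hh Hha. specialize (Hd h Hh Hha).
  rewrite Rplus_0_l, Rplus_0_r in Hd. exact Hd. Qed.


Lemma eta_region d p i : 1 < sumsq d p -> (i < d)%nat ->
  exists eta, 0 < eta /\ forall t, Rabs t < eta -> 1 < sumsq d (shift p i t).
Proof.
  intros HS Hi. set (S := sumsq d p) in *.
  assert (Hq : 0 < (S - 1) / (2 * Rabs (p i) + 1)).
  { apply Rdiv_lt_0_compat; [lra|]. pose proof (Rabs_pos (p i)); lra. }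
  exists (Rmin 1 ((S - 1) / (2 * Rabs (p i) + 1))). split.
  { unfold Rmin; destruct (Rle_dec _ _); lra. }
  intros t Ht. rewrite sumsq_shift_lt by auto. fold S.
  assert (Ht1 : Rabs t < 1) by (eapply Rlt_le_trans; [exact Ht| apply Rmin_l]).
  assert (Ht2 : Rabs t < (S - 1) / (2 * Rabs (p i) + 1)) by (eapply Rlt_le_trans; [exact Ht| apply Rmin_r]).
  pose proof (Rabs_pos (p i)). pose proof (Rabs_pos t).
  assert (Ht3 : Rabs t * (2 * Rabs (p i) + 1) < S - 1).
  { apply (Rmult_lt_compat_r (2 * Rabs (p i) + 1)) in Ht2; [|lra].
    unfold Rdiv in Ht2. rewrite Rmult_assoc, Rinv_l in Ht2 by lra. lra. }
  assert (Hpt : - (Rabs (p i) * Rabs t) <= p i * t).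
  { rewrite <- Rabs_mult. pose proof (Rle_abs (- (p i * t))) as HH. rewrite Rabs_Ropp in HH. lra. }
  nra.
Qed.

Lemma Dpoly S a t : derivable_pt_lim (fun t => S + 2 * a * t + t ^ 2) t (2 * a + 2 * t).
Proof.
  eapply dl_eq.
  - apply Dadd. apply Dadd. apply Dc. apply Dscal. apply Did.
    apply (Dpow (fun t => t) t 1 2). apply Did.
  - simpl. ring.
Qed.

Lemma local_ineq d U (Du : nat -> (nat -> R) -> R) (D2 : R) phi phi1 phi2v sg p i :
  inRd d p -> 1 < sumsq d p -> (i < d)%nat ->
  (forall x, inRd d x -> 1 < sumsq d x -> partial_is U i x (Du i x)) ->
  partial_is (Du i) i p D2 ->
  (forall y, 0 < y -> derivable_pt_lim phi y (phi1 y)) ->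
  derivable_pt_lim phi1 (sumsq d p) phi2v ->
  (exists eta, 0 < eta /\ forall t, Rabs t < eta ->
      sg * (U (shift p i t) - phi (sumsq d (shift p i t))) <= sg * (U p - phi (sumsq d p))) ->
  sg * (D2 - (phi2v * (2 * p i) ^ 2 + 2 * phi1 (sumsq d p))) <= 0.
Proof.
  intros Hp HS Hi HU HD2 Hphi Hphi2 [eta1 [He1 Hmax]].
  destruct (eta_region d p i HS Hi) as [eta0 [He0 Hreg]].
  set (S := sumsq d p) in *.
  set (eta := Rmin eta0 eta1).
  assert (Heta : 0 < eta) by (unfold eta, Rmin; destruct (Rle_dec _ _); lra).
  assert (Hle0 : forall t, Rabs t < eta -> Rabs t < eta0) by
    (intros t Ht; eapply Rlt_le_trans; [exact Ht| apply Rmin_l]).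
  assert (Hle1 : forall t, Rabs t < eta -> Rabs t < eta1) by
    (intros t Ht; eapply Rlt_le_trans; [exact Ht| apply Rmin_r]).
  apply (secder (fun t => sg * (U (shift p i t) - phi (S + 2 * p i * t + t ^ 2)))
                (fun t => sg * (Du i (shift p i t) - phi1 (S + 2 * p i * t + t ^ 2) * (2 * p i + 2 * t)))
                _ eta Heta).
  - intros t Ht.
    assert (Hpos : 1 < S + 2 * p i * t + t ^ 2).
    { unfold S. rewrite <- sumsq_shift_lt by auto. apply Hreg, Hle0, Ht. }
    apply Dscal. apply Dsub.
    + apply Dtrans. 
      pose proof (HU (shift p i t) (inRd_shift d p i t Hp Hi)) as H.
      rewrite sumsq_shift_lt in H by auto. specialize (H Hpos).
      unfold partial_is in H. eapply dl_ext; [|exact H]. intro s. simpl. rewrite shift_shift. reflexivity.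
    + eapply dl_eq. apply (Dcomp phi (fun t => S + 2 * p i * t + t ^ 2)). apply Dpoly.
      apply Hphi. lra. ring.
  - eapply dl_eq. apply Dscal. apply Dsub. exact HD2.
    apply Dmul.
    + apply (Dcomp phi1 (fun t => S + 2 * p i * t + t ^ 2)). apply Dpoly.
      replace (S + 2 * p i * 0 + 0 ^ 2) with S by ring. exact Hphi2.
    + eapply dl_eq. apply Dadd. apply Dc. apply Dscal. apply Did. reflexivity.
    + simpl. replace (S + 2 * p i * 0 + 0 * (0 * 1)) with S by ring. ring.
  - intros t Ht. rewrite shift0. replace (S + 2 * p i * 0 + 0 ^ 2) with S by ring.
    unfold S. rewrite <- sumsq_shift_lt by auto. apply Hmax, Hle1, Ht.
Qed.


Definition phiV (c S : R) := c * / S.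
Definition phiV1 (c S : R) := - c * / S ^ 2.
Definition phiV2 (c S : R) := 2 * c * / S ^ 3.

Lemma phiV_d c y : 0 < y -> derivable_pt_lim (phiV c) y (phiV1 c y).
Proof. intros Hy. unfold phiV, phiV1.
  eapply dl_eq. apply Dscal. apply Dinv. lra. apply Did. cbv beta. field. lra. Qed.

Lemma phiV1_d c y : 0 < y -> derivable_pt_lim (phiV1 c) y (phiV2 c y).
Proof. intros Hy. unfold phiV1, phiV2.
  eapply dl_eq. apply Dscal. apply Dinv. apply pow_nonzero; lra. apply (Dpow (fun t => t)). apply Did.
  simpl. field. lra. Qed.

Lemma phiV_lap (d : nat) S : 0 < S ->
  phiV2 (2 * (4 - INR d)) S * 4 * S + 2 * INR d * phiV1 (2 * (4 - INR d)) S
  = phiV (2 * (4 - INR d)) S ^ 2.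
Proof. intros HS. unfold phiV, phiV1, phiV2. field. lra. Qed.

Definition Y (S : R) := sqrt (sqrt S).

Lemma Y_pos S : 0 < S -> 0 < Y S.
Proof. intros. unfold Y. apply sqrt_lt_R0, sqrt_lt_R0; auto. Qed.
Lemma Y_pow4 S : 0 <= S -> Y S ^ 4 = S.
Proof. intros. unfold Y. replace 4%nat with (2*2)%nat by reflexivity. rewrite pow_mult.
  simpl. rewrite !Rmult_1_r, sqrt_sqrt, sqrt_sqrt; auto. apply sqrt_pos. Qed.

Lemma Y_d S : 0 < S -> derivable_pt_lim Y S (/ (4 * Y S ^ 3)).
Proof. intros HS. unfold Y.
  assert (H1 : 0 < sqrt S) by (apply sqrt_lt_R0; auto).
  assert (H2 : 0 < sqrt (sqrt S)) by (apply sqrt_lt_R0; auto).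
  eapply dl_eq. apply (Dcomp sqrt sqrt). apply Dsqrt; auto. apply Dsqrt; auto.
  assert (E : sqrt S = sqrt (sqrt S) ^ 2) by (simpl; rewrite Rmult_1_r, sqrt_sqrt; lra).
  set (z := sqrt (sqrt S)) in *. rewrite E. field. lra. Qed.

Lemma compY_d q q1 S : 0 < S -> derivable_pt_lim q (Y S) (q1 (Y S)) ->
  derivable_pt_lim (fun S => q (Y S)) S (q1 (Y S) * / (4 * Y S ^ 3)).
Proof. intros HS H. apply Dcomp; auto. apply Y_d; auto. Qed.

Definition q (c b y : R) := c * / (y ^ 2 * (y + b) ^ 2).
Definition q1 (c b y : R) := - 2 * c * (2 * y + b) * / (y ^ 3 * (y + b) ^ 3).
Definition r (c b y : R) := q1 c b y * / (4 * y ^ 3).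
Definition r1 (c b y : R) := c / 2 * (16 * y ^ 2 + 19 * b * y + 6 * b ^ 2) * / (y ^ 7 * (y + b) ^ 4).

Lemma q_d c b y : 0 < y -> 0 < b -> derivable_pt_lim (q c b) y (q1 c b y).
Proof. intros Hy Hb. unfold q, q1.
  assert (y + b <> 0) by lra.
  eapply dl_eq. apply Dscal. apply Dinv.
  apply Rmult_integral_contrapositive; split; apply pow_nonzero; lra.
  apply Dmul. apply (Dpow (fun t => t)). apply Did.
  apply (Dpow (fun t => t + b)). apply Dadd. apply Did. apply Dc.
  simpl. field. split; lra. Qed.

Lemma r_d c b y : 0 < y -> 0 < b -> derivable_pt_lim (r c b) y (r1 c b y).
Proof. intros Hy Hb. unfold r, q1, r1.
  assert (y + b <> 0) by lra.
  eapply dl_eq. apply Dmul. apply Dmul. apply Dscal. apply Dadd. apply Dscal. apply Did. apply Dc.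
  apply Dinv.
  apply Rmult_integral_contrapositive; split; apply pow_nonzero; lra.
  apply Dmul. apply (Dpow (fun t => t)). apply Did.
  apply (Dpow (fun t => t + b)). apply Dadd. apply Did. apply Dc.
  apply Dinv. apply Rmult_integral_contrapositive; split; [lra| apply pow_nonzero; lra].
  apply Dscal. apply (Dpow (fun t => t)). apply Did.
  simpl. field. split; lra. Qed.

Definition phiP c b S := q c b (Y S).
Definition phiP1 c b S := r c b (Y S).
Definition phiP2 c b S := r1 c b (Y S) * / (4 * Y S ^ 3).

Lemma phiP_d c b S : 0 < S -> 0 < b -> derivable_pt_lim (phiP c b) S (phiP1 c b S).
Proof. intros HS Hb. unfold phiP, phiP1.
  eapply dl_eq. apply compY_d with (q1 := q1 c b); auto. apply q_d; auto. apply Y_pos; auto.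
  unfold r. reflexivity. Qed.

Lemma phiP1_d c b S : 0 < S -> 0 < b -> derivable_pt_lim (phiP1 c b) S (phiP2 c b S).
Proof. intros HS Hb. unfold phiP1, phiP2.
  apply compY_d; auto. apply r_d; auto. apply Y_pos; auto. Qed.

Lemma phiP_lap (d : nat) b S : 0 < S -> 0 < b -> (d <= 3)%nat ->
  phiP (2 * (4 - INR d)) b S ^ 2 <=
  phiP2 (2 * (4 - INR d)) b S * 4 * S + 2 * INR d * phiP1 (2 * (4 - INR d)) b S.
Proof. intros HS Hb Hd.
  unfold phiP, phiP1, phiP2, q, r, q1, r1.
  pose proof (Y_pos S HS) as Hy. pose proof (Y_pow4 S) as E4.
  set (y := Y S) in *. rewrite <- E4 by lra. set (c := 2 * (4 - INR d)).
  assert (Hd3 : INR d <= 3) by (apply le_INR in Hd; simpl in Hd; lra).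
  assert (Hc : 0 < c) by (unfold c; lra).
  assert (E : c / 2 * (16 * y ^ 2 + 19 * b * y + 6 * b ^ 2) * / (y ^ 7 * (y + b) ^ 4) *
     / (4 * y ^ 3) * 4 * y ^ 4 +
     2 * INR d * (- 2 * c * (2 * y + b) * / (y ^ 3 * (y + b) ^ 3) * / (4 * y ^ 3)) -
     (c * / (y ^ 2 * (y + b) ^ 2)) ^ 2
     = c * ((19/2 - 3 * INR d) * b * y + (3 - INR d) * b ^ 2 + (8 - 2 * INR d - c) * y ^ 2)
       * / (y ^ 6 * (y + b) ^ 4)).
  { field. split; lra. }
  assert (0 <= c * ((19/2 - 3 * INR d) * b * y + (3 - INR d) * b ^ 2 + (8 - 2 * INR d - c) * y ^ 2)
       * / (y ^ 6 * (y + b) ^ 4)).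
  { apply Rmult_le_pos; [apply Rmult_le_pos; [lra|] |].
    - replace (8 - 2 * INR d - c) with 0 by (unfold c; ring).
      assert (0 <= (19/2 - 3 * INR d) * b * y) by (apply Rmult_le_pos; [apply Rmult_le_pos|]; lra).
      assert (0 <= (3 - INR d) * b ^ 2) by (apply Rmult_le_pos; [lra| apply pow2_ge_0]).
      lra.
    - left. apply Rinv_0_lt_compat. apply Rmult_lt_0_compat; apply pow_lt; lra. }
  lra.
Qed.


Lemma coord_abs d z i : (i < d)%nat -> Rabs (z i) <= norm d z.
Proof. intros Hi. pose proof (coord_le d z i Hi). rewrite <- norm_sq in H.
  pose proof (norm_nonneg d z). pose proof (Rabs_pos (z i)).
  rewrite <- (pow2_abs (z i)) in H. nra. Qed.

Lemma sq_diff_bound a b del M : Rabs (b - a) <= del -> Rabs a <= M ->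
  Rabs (b ^ 2 - a ^ 2) <= del * (2 * M + del).
Proof. intros H1 H2.
  replace (b ^ 2 - a ^ 2) with ((b - a) * (2 * a + (b - a))) by ring.
  rewrite Rabs_mult. pose proof (Rabs_triang (2 * a) (b - a)).
  rewrite Rabs_mult in H. rewrite (Rabs_right 2) in H by lra.
  pose proof (Rabs_pos (b - a)). pose proof (Rabs_pos (2 * a + (b - a))).
  apply Rmult_le_compat; auto. lra. Qed.

Lemma sumsq_diff d x y del M : 0 <= del ->
  (forall i, (i < d)%nat -> Rabs (y i - x i) <= del) ->
  (forall i, (i < d)%nat -> Rabs (x i) <= M) ->
  Rabs (sumsq d y - sumsq d x) <= INR d * (del * (2 * M + del)).
Proof. intros Hdel. induction d; intros H1 H2.
  - simpl. rewrite Rminus_0_r, Rabs_R0. lra.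
  - change (sumsq (S d) y) with (sumsq d y + y d ^ 2).
    change (sumsq (S d) x) with (sumsq d x + x d ^ 2). rewrite S_INR.
    replace (sumsq d y + y d ^ 2 - (sumsq d x + x d ^ 2)) with
      ((sumsq d y - sumsq d x) + (y d ^ 2 - x d ^ 2)) by ring.
    eapply Rle_trans. apply Rabs_triang.
    assert (A1 : Rabs (sumsq d y - sumsq d x) <= INR d * (del * (2 * M + del)))
      by (apply IHd; intros; [apply H1| apply H2]; lia).
    assert (A2 : Rabs (y d ^ 2 - x d ^ 2) <= del * (2 * M + del))
      by (apply sq_diff_bound; [apply H1| apply H2]; lia).
    replace ((INR d + 1) * (del * (2 * M + del))) with (INR d * (del * (2 * M + del)) + del * (2 * M + del)) by ring.
    lra.
Qed.

Lemma cont_pt_eps f S : continuity_pt f S ->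
  forall eps, 0 < eps -> exists alp, 0 < alp /\ forall z, Rabs (z - S) < alp -> Rabs (f z - f S) < eps.
Proof. intros H eps Heps. destruct (H eps Heps) as [alp [Ha Hz]]. exists alp; split; auto.
  intros z Hzs. destruct (Req_dec z S) as [->|Hne].
  - rewrite Rminus_eq_0, Rabs_R0; auto.
  - apply Hz. split. split; [exact I| auto]. exact Hzs. Qed.

Lemma radial_cont d phi (P : (nat -> R) -> Prop) :
  (forall x, P x -> 0 < sumsq d x) ->
  (forall S, 0 < S -> continuity_pt phi S) ->
  cont_on d P (fun x => phi (sumsq d x)).
Proof.
  intros HP Hc x Hx HPx eps Heps.
  destruct (cont_pt_eps phi (sumsq d x) (Hc _ (HP x HPx)) eps Heps) as [alp [Ha Hz]].
  set (M := norm d x).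
  assert (HM : 0 <= M) by apply norm_nonneg.
  set (del := Rmin 1 (alp / (INR d * (2 * M + 1) + 1))).
  assert (Hq : 0 < alp / (INR d * (2 * M + 1) + 1)).
  { apply Rdiv_lt_0_compat; auto. pose proof (pos_INR d). nra. }
  assert (Hdel : 0 < del) by (unfold del, Rmin; destruct (Rle_dec _ _); lra).
  exists del. split; auto.
  intros y Hy HPy Hn. apply Hz.
  set (e := norm d (vsub y x)) in *.
  assert (He0 : 0 <= e) by apply norm_nonneg.
  eapply Rle_lt_trans. apply (sumsq_diff d x y e M He0).
  - intros i Hi. apply (coord_abs d (vsub y x) i Hi).
  - intros i Hi. apply coord_abs; auto.
  - assert (e < 1) by (eapply Rlt_le_trans; [exact Hn| apply Rmin_l]).
    assert (e < alp / (INR d * (2 * M + 1) + 1)) by (eapply Rlt_le_trans; [exact Hn| apply Rmin_r]).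
    pose proof (pos_INR d).
    assert (INR d * (e * (2 * M + e)) <= e * (INR d * (2 * M + 1))).
    { assert (e * (2 * M + e) <= e * (2 * M + 1)) by nra. nra. }
    assert (e * (INR d * (2 * M + 1) + 1) < alp).
    { apply (Rmult_lt_compat_r (INR d * (2 * M + 1) + 1)) in H0; [|nra].
      unfold Rdiv in H0. rewrite Rmult_assoc, Rinv_l in H0 by nra. lra. }
    nra.
Qed.

Lemma cont_on_sub d P f g : cont_on d P f -> cont_on d P g -> cont_on d P (fun x => f x - g x).
Proof. intros Hf Hg x Hx HPx eps Heps.
  destruct (Hf x Hx HPx (eps/2)) as [d1 [Hd1 H1]]; [lra|].
  destruct (Hg x Hx HPx (eps/2)) as [d2 [Hd2 H2]]; [lra|].
  exists (Rmin d1 d2). split. unfold Rmin; destruct (Rle_dec _ _); lra.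
  intros y Hy HPy Hn.
  assert (A : Rabs (f y - f x) < eps/2) by (apply H1; auto; eapply Rlt_le_trans; [exact Hn|apply Rmin_l]).
  assert (B : Rabs (g y - g x) < eps/2) by (apply H2; auto; eapply Rlt_le_trans; [exact Hn|apply Rmin_r]).
  replace (f y - g y - (f x - g x)) with ((f y - f x) - (g y - g x)) by ring.
  eapply Rle_lt_trans. apply Rabs_triang. rewrite Rabs_Ropp. lra.
Qed.

Lemma cont_on_opp d P f : cont_on d P f -> cont_on d P (fun x => - f x).
Proof. intros Hf x Hx HPx eps Heps. destruct (Hf x Hx HPx eps Heps) as [d1 [Hd1 H1]].
  exists d1; split; auto. intros y Hy HPy Hn.
  replace (- f y - - f x) with (- (f y - f x)) by ring. rewrite Rabs_Ropp. auto. Qed.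

Lemma dlim_cont f x l : derivable_pt_lim f x l -> continuity_pt f x.
Proof. intros H. apply derivable_continuous_pt. exists l. exact H. Qed.


Fixpoint rec_sub (ch : nat -> nat -> nat) (n : nat) : nat :=
  match n with
  | O => ch O O
  | S m => ch (S (rec_sub ch m)) (S m)
  end.

Lemma BW1 (u : nat -> R) M : (forall n, Rabs (u n) <= M) ->
  exists psi : nat -> nat, (forall n, (psi n < psi (S n))%nat) /\
    exists L, Un_cv (fun n => u (psi n)) L.
Proof.
  intros Hb.
  destruct (Bolzano_Weierstrass u (fun c => -M <= c <= M) (compact_P3 (-M) M)) as [l Hl].
  { intro n. specialize (Hb n). pose proof (Rle_abs (u n)). pose proof (Rle_abs (- u n)) as HH.
    rewrite Rabs_Ropp in HH. lra. }
  assert (Hcl : forall N k, exists p, (N <= p)%nat /\ Rabs (u p - l) < / INR (S k)).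
  { intros N k.
    assert (Hpk : 0 < / INR (S k)) by (apply Rinv_0_lt_compat, lt_0_INR; lia).
    destruct (Hl (disc l (mkposreal _ Hpk)) N) as [p [Hp1 Hp2]].
    - exists (mkposreal _ Hpk). intros z Hz. exact Hz.
    - exists p. split; auto. }
  set (ch := fun N k => proj1_sig (constructive_indefinite_description _ (Hcl N k))).
  assert (Hch : forall N k, (N <= ch N k)%nat /\ Rabs (u (ch N k) - l) < / INR (S k)).
  { intros N k. unfold ch. destruct (constructive_indefinite_description _ (Hcl N k)) as [p Hp]. exact Hp. }
  exists (rec_sub ch). split.
  - intro n. simpl. destruct (Hch (S (rec_sub ch n)) (S n)). lia.
  - exists l. intros eps Heps.
    destruct (archimed_cor1 eps Heps) as [N [HN HN0]].
    exists N. intros n Hn. unfold R_dist.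
    assert (Hn' : Rabs (u (rec_sub ch n) - l) < / INR (S n)).
    { destruct n; simpl; apply Hch. }
    eapply Rlt_trans. exact Hn'. eapply Rle_lt_trans; [|exact HN].
    apply Rinv_le_contravar. apply lt_0_INR; lia. apply le_INR. lia.
Qed.

Lemma incr_mono (phi : nat -> nat) : (forall n, (phi n < phi (S n))%nat) ->
  forall a b, (a < b)%nat -> (phi a < phi b)%nat.
Proof. intros H a b Hab. induction Hab. apply H. specialize (H m). lia. Qed.

Lemma incr_ge (phi : nat -> nat) : (forall n, (phi n < phi (S n))%nat) -> forall n, (n <= phi n)%nat.
Proof. intros H n. induction n. lia. specialize (H n). lia. Qed.

Lemma sub_cv a L (psi : nat -> nat) : Un_cv a L -> (forall n, (n <= psi n)%nat) ->
  Un_cv (fun n => a (psi n)) L.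
Proof. intros H Hp eps Heps. destruct (H eps Heps) as [N HN]. exists N.
  intros n Hn. apply HN. specialize (Hp n). lia. Qed.

Lemma extract d (x : nat -> nat -> R) M : (forall n i, (i < d)%nat -> Rabs (x n i) <= M) ->
  forall m, (m <= d)%nat -> exists phi : nat -> nat, (forall n, (phi n < phi (S n))%nat) /\
    exists l : nat -> R, forall i, (i < m)%nat -> Un_cv (fun n => x (phi n) i) (l i).
Proof.
  intros Hb m. induction m; intros Hm.
  - exists (fun n => n). split. intro; lia. exists (fun _ => 0). intros; lia.
  - destruct IHm as [phi [Hphi [l Hl]]]; [lia|].
    destruct (BW1 (fun n => x (phi n) m) M) as [psi [Hpsi [L HL]]].
    { intro n. apply Hb. lia. }
    exists (fun n => phi (psi n)). split.
    { intro n. apply incr_mono; auto. }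
    exists (fun i => if Nat.eqb i m then L else l i).
    intros i Hi. destruct (Nat.eqb_spec i m) as [->|Hne].
    + exact HL.
    + apply (sub_cv (fun n => x (phi n) i) (l i) psi). apply Hl. lia. apply incr_ge; auto.
Qed.

Lemma Un_cv_ext a b L : (forall n, a n = b n) -> Un_cv a L -> Un_cv b L.
Proof. intros H H1 eps He. destruct (H1 eps He) as [N HN]. exists N. intros n Hn. rewrite <- H. auto. Qed.

Lemma cv_sumsq d (z : nat -> nat -> R) (l : nat -> R) :
  (forall i, (i < d)%nat -> Un_cv (fun n => z n i) (l i)) ->
  Un_cv (fun n => sumsq d (z n)) (sumsq d l).
Proof. induction d; intros H.
  - simpl. intros eps He. exists O. intros. unfold R_dist. rewrite Rminus_diag, Rabs_R0. auto.
  - simpl. apply CV_plus. apply IHd. intros; apply H; lia.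
    assert (Hc := H d (Nat.lt_succ_diag_r d)).
    apply (Un_cv_ext (fun n => z n d * (z n d * 1))). intro; reflexivity.
    apply CV_mult. auto. replace (l d * 1) with (l d * 1) by ring.
    apply (CV_mult _ (fun _ => 1)). auto. intros eps He. exists O. intros. unfold R_dist.
    rewrite Rminus_diag, Rabs_R0. auto.
Qed.

Lemma cv_const c : Un_cv (fun _ => c) c.
Proof. intros eps He. exists O. intros. unfold R_dist. rewrite Rminus_diag, Rabs_R0. auto. Qed.

Lemma sumsq_zero d : sumsq d (fun _ => 0) = 0.
Proof. induction d; simpl; auto. rewrite IHd. ring. Qed.

Lemma compact_seq d Rb (x : nat -> nat -> R) :
  (forall n, inRd d (x n) /\ 1 <= sumsq d (x n) /\ sumsq d (x n) <= Rb) ->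
  exists p (phi : nat -> nat), inRd d p /\ 1 <= sumsq d p /\ sumsq d p <= Rb /\
    (forall n, (n <= phi n)%nat) /\
    forall eps, 0 < eps -> exists N, forall n, (N <= n)%nat -> norm d (vsub (x (phi n)) p) < eps.
Proof.
  intros Hx.
  assert (Hb : forall n i, (i < d)%nat -> Rabs (x n i) <= 1 + Rb).
  { intros n i Hi. pose proof (coord_le d (x n) i Hi). destruct (Hx n) as [_ [H1 H2]].
    rewrite <- (pow2_abs (x n i)) in H. pose proof (Rabs_pos (x n i)). nra. }
  destruct (extract d x (1 + Rb) Hb d (Nat.le_refl d)) as [phi [Hphi [l Hl]]].
  set (p := fun i => if Nat.ltb i d then l i else 0).
  assert (Hpl : forall i, (i < d)%nat -> p i = l i).
  { intros i Hi. unfold p. replace (Nat.ltb i d) with true; auto. symmetry; apply Nat.ltb_lt; auto. }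
  assert (Hcv : Un_cv (fun n => sumsq d (x (phi n))) (sumsq d p)).
  { apply cv_sumsq. intros i Hi. rewrite Hpl; auto. }
  assert (Hcv0 : Un_cv (fun n => sumsq d (vsub (x (phi n)) p)) 0).
  { rewrite <- (sumsq_zero d). apply cv_sumsq. intros i Hi.
    unfold vsub. rewrite <- (Rminus_diag (p i)).
    apply (CV_plus _ (fun _ => - p i)). rewrite Hpl; auto. apply cv_const. }
  exists p, phi. split; [|split; [|split; [|split]]].
  - intros i Hi. unfold p. replace (Nat.ltb i d) with false; auto. symmetry; apply Nat.ltb_ge; auto.
  - apply (@Rle_cv_lim (fun _ => 1) (fun n => sumsq d (x (phi n)))); auto.
    intro n; apply Hx. apply cv_const.
  - apply (@Rle_cv_lim (fun n => sumsq d (x (phi n))) (fun _ => Rb)); auto.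
    intro n; apply Hx. apply cv_const.
  - apply incr_ge; auto.
  - intros eps Heps. destruct (Hcv0 (eps ^ 2)) as [N HN]. apply pow_lt; auto.
    exists N. intros n Hn. specialize (HN n Hn). unfold R_dist in HN.
    rewrite Rminus_0_r, Rabs_right in HN by (apply Rle_ge, sumsq_nonneg).
    unfold norm. rewrite <- (sqrt_pow2 eps) by lra. apply sqrt_lt_1_alt. split.
    apply sumsq_nonneg. auto.
Qed.


Definition KR d Rb (y : nat -> R) := inRd d y /\ 1 <= sumsq d y /\ sumsq d y <= Rb.

Lemma seq_choice (P : nat -> (nat -> R) -> Prop) : (forall n, exists y, P n y) ->
  exists x : nat -> nat -> R, forall n, P n (x n).
Proof. intros H. exists (fun n => proj1_sig (constructive_indefinite_description _ (H n))).
  intro n. destruct (constructive_indefinite_description _ (H n)) as [y Hy]. exact Hy. Qed.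

Lemma cont_K d w p : cont_on d (fun x => 1 <= norm d x) w -> inRd d p -> 1 <= sumsq d p ->
  forall eps, 0 < eps -> exists del, 0 < del /\ forall y, inRd d y -> 1 <= sumsq d y ->
    norm d (vsub y p) < del -> Rabs (w y - w p) < eps.
Proof. intros Hc Hp Hp1 eps He. destruct (Hc p Hp (proj2 (norm_ge1 d p) Hp1) eps He) as [del [Hd H]].
  exists del; split; auto. intros z Hz Hz1 Hn. apply H; auto. apply norm_ge1; auto. Qed.

Lemma max_exists d Rb w : cont_on d (fun x => 1 <= norm d x) w -> (exists x0, KR d Rb x0) ->
  exists p, KR d Rb p /\ forall y, KR d Rb y -> w y <= w p.
Proof.
  intros Hc [x0 Hx0].
  assert (Hbd : exists B, forall y, KR d Rb y -> w y <= B).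
  { apply NNPP. intro Hn.
    assert (Hs : forall n, exists y, KR d Rb y /\ INR n < w y).
    { intro n. apply NNPP. intro Hn2. apply Hn. exists (INR n). intros y Hy.
      apply Rnot_lt_le. intro Hlt. apply Hn2. exists y. auto. }
    destruct (seq_choice _ Hs) as [x Hx].
    destruct (compact_seq d Rb x) as [p [phi [Hp [Hp1 [Hp2 [Hge Hcv]]]]]].
    { intro n. apply Hx. }
    destruct (cont_K d w p Hc Hp Hp1 1) as [del [Hdel Hcont]]; [lra|].
    destruct (Hcv del Hdel) as [N HN].
    destruct (INR_archimed 1 (w p + 1)) as [m Hm]; [lra|]. rewrite Rmult_1_r in Hm.
    set (n := Nat.max N m).
    assert (A : Rabs (w (x (phi n)) - w p) < 1).
    { apply Hcont. apply Hx. apply Hx. apply HN. unfold n; lia. }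
    assert (B : INR (phi n) < w (x (phi n))) by apply Hx.
    assert (C : INR m <= INR (phi n)) by (apply le_INR; pose proof (Hge n); unfold n in *; lia).
    pose proof (Rle_abs (w (x (phi n)) - w p)). lra. }
  destruct Hbd as [B HB].
  set (E := fun v => exists y, KR d Rb y /\ v = w y).
  destruct (completeness E) as [s [Hub Hlub]].
  { exists B. intros v [y [Hy ->]]. auto. }
  { exists (w x0). exists x0. auto. }
  assert (Hs : forall n, exists y, KR d Rb y /\ s - / INR (S n) < w y).
  { intro n. apply NNPP. intro Hn.
    assert (Hpos : 0 < / INR (S n)) by (apply Rinv_0_lt_compat, lt_0_INR; lia).
    assert (s <= s - / INR (S n)).
    { apply Hlub. intros v [y [Hy ->]]. apply Rnot_lt_le. intro Hlt. apply Hn. exists y; auto. }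
    lra. }
  destruct (seq_choice _ Hs) as [x Hx].
  destruct (compact_seq d Rb x) as [p [phi [Hp [Hp1 [Hp2 [Hge Hcv]]]]]].
  { intro n. apply Hx. }
  exists p. split. repeat split; auto.
  assert (Hwp : s <= w p).
  { apply Rnot_lt_le. intro Hlt.
    set (eps := (s - w p) / 2).
    assert (Heps : 0 < eps) by (unfold eps; lra).
    destruct (cont_K d w p Hc Hp Hp1 eps Heps) as [del [Hdel Hcont]].
    destruct (Hcv del Hdel) as [N1 HN1].
    destruct (archimed_cor1 eps Heps) as [N2 [HN2 HN2']].
    set (n := Nat.max N1 N2).
    assert (A : Rabs (w (x (phi n)) - w p) < eps).
    { apply Hcont. apply Hx. apply Hx. apply HN1. unfold n; lia. }
    assert (Bn : s - / INR (S (phi n)) < w (x (phi n))) by apply Hx.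
    assert (C : / INR (S (phi n)) <= / INR N2).
    { apply Rinv_le_contravar. apply lt_0_INR; lia. apply le_INR. pose proof (Hge n). unfold n in *; lia. }
    pose proof (Rle_abs (w (x (phi n)) - w p)). unfold eps in *. lra. }
  intros y Hy. eapply Rle_trans; [|exact Hwp]. apply Hub. exists y; auto.
Qed.

Lemma maxprinciple d w :
  cont_on d (fun x => 1 <= norm d x) w ->
  (forall x, inRd d x -> sumsq d x = 1 -> w x <= 0) ->
  (forall eps, 0 < eps -> exists M, forall x, inRd d x -> M < sumsq d x -> w x < eps) ->
  (forall p, inRd d p -> 1 < sumsq d p -> 0 < w p ->
     (forall y, inRd d y -> 1 <= sumsq d y -> w y <= w p) -> False) ->
  forall x, inRd d x -> 1 <= sumsq d x -> w x <= 0.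
Proof.
  intros Hc Hbd Hdec Hloc x Hx Hx1. apply Rnot_lt_le. intro Hpos.
  destruct (Hdec (w x) Hpos) as [M HM].
  set (Rb := Rmax M (sumsq d x) + 1).
  destruct (max_exists d Rb w Hc) as [p [[Hp [Hp1 Hp2]] Hmax]].
  { exists x. repeat split; auto. unfold Rb. pose proof (Rmax_r M (sumsq d x)). lra. }
  assert (Hwx : w x <= w p) by (apply Hmax; repeat split; auto; unfold Rb; pose proof (Rmax_r M (sumsq d x)); lra).
  assert (HpM : sumsq d p <= M).
  { apply Rnot_lt_le. intro Hlt. specialize (HM p Hp Hlt). lra. }
  assert (Hp1' : 1 < sumsq d p).
  { destruct Hp1 as [|Heq]; auto. specialize (Hbd p Hp (eq_sym Heq)). lra. }
  apply (Hloc p Hp Hp1'). lra.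
  intros y Hy Hy1. destruct (Rle_lt_dec (sumsq d y) Rb) as [Hle|Hlt].
  - apply Hmax. repeat split; auto.
  - assert (M < sumsq d y) by (unfold Rb in Hlt; pose proof (Rmax_l M (sumsq d x)); lra).
    specialize (HM y Hy H). lra.
Qed.


Lemma sum_to_ext d a b : (forall i, (i < d)%nat -> a i = b i) -> sum_to d a = sum_to d b.
Proof. induction d; intros H; simpl; auto. rewrite IHd, H; auto; intros; apply H; lia. Qed.

Lemma sum_to_comb d sg a b : sum_to d (fun i => sg * (a i - b i)) = sg * (sum_to d a - sum_to d b).
Proof. induction d; simpl; [ring|]. rewrite IHd. ring. Qed.

Lemma sum_to_zero d : sum_to d (fun _ => 0) = 0.
Proof. induction d; simpl; auto. rewrite IHd; ring. Qed.

Lemma lap_sum d U (Du : nat -> (nat -> R) -> R) (D2u : nat -> nat -> (nat -> R) -> R)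
  phi phi1 phi2v sg p :
  inRd d p -> 1 < sumsq d p ->
  (forall i, (i < d)%nat -> forall x, inRd d x -> 1 < sumsq d x -> partial_is U i x (Du i x)) ->
  (forall i, (i < d)%nat -> partial_is (Du i) i p (D2u i i p)) ->
  (forall y, 0 < y -> derivable_pt_lim phi y (phi1 y)) ->
  derivable_pt_lim phi1 (sumsq d p) phi2v ->
  (forall y, inRd d y -> 1 <= sumsq d y -> sg * (U y - phi (sumsq d y)) <= sg * (U p - phi (sumsq d p))) ->
  sg * (sum_to d (fun i => D2u i i p) - (phi2v * 4 * sumsq d p + 2 * INR d * phi1 (sumsq d p))) <= 0.
Proof.
  intros Hp HS HU HD2 Hphi Hphi2 Hmax.
  assert (Hi : forall i, (i < d)%nat ->
    sg * (D2u i i p - (phi2v * (2 * p i) ^ 2 + 2 * phi1 (sumsq d p))) <= 0).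
  { intros i Hi. apply (local_ineq d U Du (D2u i i p) phi phi1 phi2v sg p i); auto.
    destruct (eta_region d p i HS Hi) as [eta [He Hreg]]. exists eta. split; auto.
    intros t Ht. apply Hmax. apply inRd_shift; auto. left. apply Hreg; auto. }
  assert (Hs : sum_to d (fun i => sg * (D2u i i p - (phi2v * (2 * p i) ^ 2 + 2 * phi1 (sumsq d p))))
               <= sum_to d (fun _ => 0)) by (apply sum_to_le; auto).
  rewrite sum_to_zero, sum_to_comb in Hs.
  rewrite (sum_to_ext d (fun i => phi2v * (2 * p i) ^ 2 + 2 * phi1 (sumsq d p))
                        (fun i => (4 * phi2v) * p i ^ 2 + 2 * phi1 (sumsq d p))) in Hs
    by (intros; ring).
  rewrite sum_to_lin in Hs.
  replace (phi2v * 4 * sumsq d p + 2 * INR d * phi1 (sumsq d p))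
    with (4 * phi2v * sumsq d p + 2 * phi1 (sumsq d p) * INR d) by ring. exact Hs.
Qed.

Lemma Vinf_eq d x : Vinf d x = phiV (2 * (4 - INR d)) (sumsq d x).
Proof. unfold Vinf, phiV. rewrite norm_sq. reflexivity. Qed.

Lemma partA d (Hd : (1 <= d <= 3)%nat) delta0 (Hdl : 0 < delta0 < 1) U :
  is_U_lam1 d delta0 U -> forall x, inRd d x -> 1 < norm d x -> U x <= Vinf d x.
Proof.
  intros [HU0 [HUc [HC2 [HUb HUdec]]]] x Hx Hxn.
  set (c := 2 * (4 - INR d)).
  assert (Hdr : 1 <= INR d <= 3).
  { destruct Hd as [H1 H3]. apply le_INR in H1. apply le_INR in H3. simpl in *. lra. }
  assert (Hc : 2 <= c) by (unfold c; lra).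
  destruct HC2 as [Du [D2u HC]].
  set (w := fun y => U y - phiV c (sumsq d y)).
  assert (Hw : forall y, inRd d y -> 1 <= sumsq d y -> w y <= 0).
  { apply maxprinciple.
    - apply cont_on_sub; auto. apply radial_cont.
      + intros y Hy. apply norm_ge1 in Hy. lra.
      + intros S HS. apply (dlim_cont _ _ _ (phiV_d c S HS)).
    - intros y Hy Hy1. unfold w. rewrite HUb; auto. rewrite Hy1. unfold phiV. rewrite Rinv_1. lra.
      apply norm_eq1; auto.
    - intros eps Heps. destruct (HUdec eps Heps) as [M HM]. exists (Rabs M ^ 2).
      intros y Hy HyM. unfold w.
      assert (Hn : M < norm d y).
      { pose proof (norm_sq d y). pose proof (norm_nonneg d y). pose proof (Rle_abs M).
        pose proof (Rabs_pos M). nra. }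
      specialize (HM y Hy Hn).
      assert (0 < sumsq d y) by (pose proof (pow2_ge_0 (Rabs M)); lra).
      assert (0 <= phiV c (sumsq d y)) by (unfold phiV; apply Rmult_le_pos; [lra| left; apply Rinv_0_lt_compat; auto]).
      pose proof (Rle_abs (U y)). lra.
    - intros p Hp Hp1 Hwp Hmax.
      destruct (HC p Hp (proj2 (norm_gt1 d p) Hp1)) as [_ [Hpart Hlap]].
      pose proof (lap_sum d U Du D2u (phiV c) (phiV1 c) (phiV2 c (sumsq d p)) 1 p Hp Hp1) as L.
      assert (HS0 : 0 < sumsq d p) by lra.
      specialize (L (fun i Hi x Hx Hx1 => proj1 (proj1 (proj2 (HC x Hx (proj2 (norm_gt1 d x) Hx1))) i Hi))).
      specialize (L (fun i Hi => proj1 (proj2 (proj2 (Hpart i Hi)) i Hi))).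
      specialize (L (phiV_d c) (phiV1_d c _ HS0)).
      specialize (L ltac:(intros y Hy Hy1; specialize (Hmax y Hy Hy1); unfold w in Hmax; lra)).
      rewrite <- Hlap in L. unfold c in L. rewrite (phiV_lap d (sumsq d p) HS0) in L.
      fold c in L. unfold w in Hwp.
      assert (0 < phiV c (sumsq d p)) by (unfold phiV; apply Rmult_lt_0_compat; [lra| apply Rinv_0_lt_compat; auto]).
      nra. }
  rewrite Vinf_eq. fold c. specialize (Hw x Hx). unfold w in Hw.
  apply norm_gt1 in Hxn. specialize (Hw (Rlt_le _ _ Hxn)). lra.
Qed.

Lemma Y1 : Y 1 = 1.
Proof. unfold Y. rewrite !sqrt_1. reflexivity. Qed.

Lemma partB d (Hd : (1 <= d <= 3)%nat) delta (Hdl : 0 < delta < 1) :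
  exists Cdelta : R, 1 < Cdelta /\
       forall (delta0 : R), 0 < delta0 < 1 ->
         forall U, is_U_lam1 d delta0 U ->
           forall x, inRd d x -> Cdelta / delta0 <= norm d x ->
             (1 - delta) * Vinf d x <= U x.
Proof.
  set (s := sqrt (1 - delta)).
  assert (Hs2 : s ^ 2 = 1 - delta) by (unfold s; simpl; rewrite Rmult_1_r; apply sqrt_sqrt; lra).
  assert (Hs0 : 0 < s) by (unfold s; apply sqrt_lt_R0; lra).
  assert (Hs1 : s < 1) by nra.
  set (kap := s / (1 - s)).
  assert (Hk : 0 < kap) by (unfold kap; apply Rdiv_lt_0_compat; lra).
  exists (1 + 6 * kap ^ 2). split. { pose proof (pow_lt kap 2 Hk). lra. }
  intros delta0 Hd0 U [HU0 [HUc [HC2 [HUb HUdec]]]] x Hx Hxn.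
  set (c := 2 * (4 - INR d)).
  assert (Hdr : 1 <= INR d <= 3).
  { destruct Hd as [H1 H3]. apply le_INR in H1. apply le_INR in H3. simpl in *. lra. }
  assert (Hc : 2 <= c) by (unfold c; lra).
  set (b := sqrt (c / delta0)).
  assert (Hb2 : b ^ 2 = c / delta0).
  { unfold b; simpl; rewrite Rmult_1_r; apply sqrt_sqrt. left; apply Rdiv_lt_0_compat; lra. }
  assert (Hb : 0 < b) by (unfold b; apply sqrt_lt_R0, Rdiv_lt_0_compat; lra).
  destruct HC2 as [Du [D2u HC]].
  set (w := fun y => - (U y - phiP c b (sumsq d y))).
  assert (HphiP_le : forall S, 0 < S -> 0 < phiP c b S <= c * / S).
  { intros S HS. unfold phiP, q. pose proof (Y_pos S HS) as Hy. pose proof (Y_pow4 S) as E4.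
    set (y := Y S) in *. rewrite <- E4 by lra.
    assert (Hyb : 0 < y ^ 2 * (y + b) ^ 2) by (apply Rmult_lt_0_compat; apply pow_lt; lra).
    split. apply Rmult_lt_0_compat; [lra| apply Rinv_0_lt_compat; auto].
    apply Rmult_le_compat_l; [lra|]. apply Rinv_le_contravar. apply pow_lt; lra.
    replace (y ^ 4) with (y ^ 2 * y ^ 2) by ring. apply Rmult_le_compat_l.
    apply pow_le; lra. apply pow_incr; lra. }
  assert (Hw : forall y, inRd d y -> 1 <= sumsq d y -> w y <= 0).
  { apply maxprinciple.
    - apply cont_on_opp. apply cont_on_sub; auto. apply radial_cont.
      + intros y Hy. apply norm_ge1 in Hy. lra.
      + intros S HS. apply (dlim_cont _ _ _ (phiP_d c b S HS Hb)).
    - intros y Hy Hy1. unfold w. rewrite HUb by (auto; apply norm_eq1; auto). rewrite Hy1.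
      unfold phiP, q. rewrite Y1.
      assert (Ht : 0 < 1 ^ 2 * (1 + b) ^ 2) by (simpl; nra).
      assert (c <= delta0 * (1 ^ 2 * (1 + b) ^ 2)).
      { assert (c = delta0 * b ^ 2) by (rewrite Hb2; field; lra). simpl. nra. }
      set (t := 1 ^ 2 * (1 + b) ^ 2) in *.
      assert (Hi : t * / t = 1) by (field; lra).
      assert (0 < / t) by (apply Rinv_0_lt_compat; auto).
      nra.
    - intros eps Heps. exists (Rmax 1 (c / eps)). intros y Hy HyM.
      assert (H1 : 1 < sumsq d y) by (pose proof (Rmax_l 1 (c/eps)); lra).
      assert (H2 : c / eps < sumsq d y) by (pose proof (Rmax_r 1 (c/eps)); lra).
      pose proof (HU0 y Hy (proj2 (norm_ge1 d y) (Rlt_le _ _ H1))).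
      destruct (HphiP_le (sumsq d y)) as [_ Hle]; [lra|].
      assert (c * / sumsq d y < eps).
      { apply (Rmult_lt_compat_r eps) in H2; auto. unfold Rdiv in H2.
        rewrite Rmult_assoc, Rinv_l, Rmult_1_r in H2 by lra.
        assert (Hi : sumsq d y * / sumsq d y = 1) by (field; lra).
        assert (0 < / sumsq d y) by (apply Rinv_0_lt_compat; lra). nra. }
      unfold w. lra.
    - intros p Hp Hp1 Hwp Hmax.
      destruct (HC p Hp (proj2 (norm_gt1 d p) Hp1)) as [_ [Hpart Hlap]].
      assert (HS0 : 0 < sumsq d p) by lra.
      pose proof (lap_sum d U Du D2u (phiP c b) (phiP1 c b) (phiP2 c b (sumsq d p)) (-1) p Hp Hp1) as L.
      specialize (L (fun i Hi x Hx Hx1 => proj1 (proj1 (proj2 (HC x Hx (proj2 (norm_gt1 d x) Hx1))) i Hi))).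
      specialize (L (fun i Hi => proj1 (proj2 (proj2 (Hpart i Hi)) i Hi))).
      specialize (L (fun y Hy => phiP_d c b y Hy Hb) (phiP1_d c b _ HS0 Hb)).
      specialize (L ltac:(intros y Hy Hy1; specialize (Hmax y Hy Hy1); unfold w in Hmax; lra)).
      rewrite <- Hlap in L.
      pose proof (phiP_lap d b (sumsq d p) HS0 Hb (proj2 Hd)) as Lp. fold c in Lp.
      pose proof (HU0 p Hp (proj2 (norm_ge1 d p) (Rlt_le _ _ Hp1))).
      unfold w in Hwp. nra. }
  assert (Hn1 : 1 < norm d x).
  { assert (1 < (1 + 6 * kap ^ 2) / delta0).
    { apply (Rmult_lt_reg_r delta0). lra. unfold Rdiv. rewrite Rmult_assoc, Rinv_l by lra.
      pose proof (pow_lt kap 2 Hk). lra. }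
    lra. }
  pose proof (proj1 (norm_gt1 d x) Hn1) as HS1.
  specialize (Hw x Hx (Rlt_le _ _ HS1)). unfold w in Hw.
  assert (Hfin : (1 - delta) * Vinf d x <= phiP c b (sumsq d x)).
  { rewrite Vinf_eq. fold c. unfold phiV, phiP, q.
    assert (HS0 : 0 < sumsq d x) by lra.
    pose proof (Y_pos _ HS0) as Hy. pose proof (Y_pow4 (sumsq d x)) as E4.
    assert (Hny : norm d x = Y (sumsq d x) ^ 2).
    { unfold norm, Y. simpl. rewrite Rmult_1_r, sqrt_sqrt; auto. apply sqrt_pos. }
    rewrite Hny in Hxn.
    set (y := Y (sumsq d x)) in *. rewrite <- E4 by lra.
    assert (Hyk : kap ^ 2 * b ^ 2 <= y ^ 2).
    { rewrite Hb2. eapply Rle_trans; [|exact Hxn].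
      unfold Rdiv. assert (0 < / delta0) by (apply Rinv_0_lt_compat; lra).
      assert (kap ^ 2 * c <= 1 + 6 * kap ^ 2) by (assert (c <= 6) by (unfold c; lra); pose proof (pow2_ge_0 kap); nra).
      nra. }
    assert (Hyk2 : kap * b <= y) by (assert (0 <= kap * b) by nra; nra).
    assert (Hsy : s * (y + b) <= y).
    { unfold kap in Hyk2. assert (E : s / (1 - s) * b * (1 - s) = s * b) by (field; lra).
      assert (s / (1 - s) * b * (1 - s) <= y * (1 - s)) by (apply Rmult_le_compat_r; lra).
      nra. }
    assert (Hsq : (1 - delta) * (y + b) ^ 2 <= y ^ 2).
    { rewrite <- Hs2. assert (0 <= s * (y + b)) by nra. nra. }
    assert (E : c * / (y ^ 2 * (y + b) ^ 2) - (1 - delta) * (c * / y ^ 4)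
                = c * (y ^ 2 - (1 - delta) * (y + b) ^ 2) * / (y ^ 4 * (y + b) ^ 2)).
    { field. split; lra. }
    assert (0 <= c * (y ^ 2 - (1 - delta) * (y + b) ^ 2) * / (y ^ 4 * (y + b) ^ 2)).
    { apply Rmult_le_pos. apply Rmult_le_pos; lra. left. apply Rinv_0_lt_compat.
      apply Rmult_lt_0_compat; apply pow_lt; lra. }
    lra. }
  lra.
Qed.


Theorem proposition3p3 (d : nat) (Hd : (1 <= d <= 3)%nat) :
  (forall (delta0 : R), 0 < delta0 < 1 ->
     forall U, is_U_lam1 d delta0 U ->
       forall x, inRd d x -> 1 < norm d x -> U x <= Vinf d x) /\
  (forall (delta : R), 0 < delta < 1 ->
     exists Cdelta : R, 1 < Cdelta /\
       forall (delta0 : R), 0 < delta0 < 1 ->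
         forall U, is_U_lam1 d delta0 U ->
           forall x, inRd d x -> Cdelta / delta0 <= norm d x ->
             (1 - delta) * Vinf d x <= U x).
Proof.
  split.
  - intros delta0 Hdl U HU. exact (partA d Hd delta0 Hdl U HU).
  - intros delta Hdl. exact (partB d Hd delta Hdl).
Qed.
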